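(* Let $u$ be a fast decreasing distribution on $\mathbb R^D$ (acting on $\mathbb C[\boldsymbol x]$), $\mathcal Q_2\in\mathbb C[\boldsymbol x]$ with $Z(\mathcal Q_2)\cap\operatorname{supp}u=\varnothing$, and $\check u$ a linear functional on $\mathbb C[\boldsymbol x]$ with $\mathcal Q_2\check u=u$; assume $u,\check u$ quasi-definite, and let $R=\langle\check u,P(\boldsymbol x)\chi(\boldsymbol x)^\top\rangle$. Then for every $k\ge1$ $$\check P_{[k]}(\boldsymbol x)=\Theta_*\begin{pmatrix}R_{[0],[0]}&\cdots&R_{[0],[k-1]}&P_{[0]}(\boldsymbol x)\\ \vdots&&\vdots&\vdots\\ R_{[k],[0]}&\cdots&R_{[k],[k-1]}&P_{[k]}(\boldsymbol x)\end{pmatrix},\qquad \check H_{[k]}=\Theta_*\big(R^{[k+1]}\big).$$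
   Context: $D\ge1$, $\boldsymbol x=(x_1,\dots,x_D)^\top$. $[k]=\{\boldsymbol\alpha\in\mathbb Z_+^D:|\boldsymbol\alpha|=k\}$; multi-indices ordered by graded lexicographic order; $\chi(\boldsymbol x)$ the semi-infinite vector of monomials in this order with blocks $\chi_{[k]}$; semi-infinite matrices partitioned in blocks $A_{[k],[l]}\in\mathbb C^{|[k]|\times|[l]|}$, $A^{[k]}$ the truncation to block rows/columns $0,\dots,k-1$. For a linear functional $u$ on $\mathbb C[\boldsymbol x]$ (applied entrywise), $\langle Qu,P\rangle:=\langle u,QP\rangle$; moment matrix $G=\langle u,\chi\chi^\top\rangle$; quasi-definite means $\det G^{[k]}\ne0$ for all $k$, giving $G=S^{-1}HS^{-\top}$ with $S$ block lower unitriangular and $H$ block diagonal with blocks $H_{[k]}$ (quasi-tau matrices); monic orthogonal polynomials $P(\boldsymbol x)=S\chi(\boldsymbol x)$ with blocks $P_{[k]}$. Checked symbols ($\check P_{[k]},\check H_{[k]}$) refer to $\check u$. Last quasi-determinant: for $M=\begin{pmatrix}A&B\\C&D\end{pmatrix}$ with $A$ square invertible (here the last block row and last block column are those displayed last), $\Theta_*(M)=D-CA^{-1}B$. *)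

(* Defs.v *)
From HB Require Import structures.
From mathcomp Require Import all_boot all_order all_algebra.
From mathcomp Require Import reals.
From mathcomp Require Import complex.
From mathcomp Require Import mpoly.

Set Implicit Arguments.
Unset Strict Implicit.
Unset Printing Implicit Defensive.

Import Order.TTheory GRing.Theory Num.Theory.
Local Open Scope ring_scope.

Section MultiOP.
Variables (F : fieldType) (D : nat).

Fixpoint lexge (a b : seq nat) : bool :=
  match a, b with
  | x :: a', y :: b' => (y < x)%N || ((x == y) && lexge a' b')
  | _, _ => true
  end.

Definition mons (k : nat) : seq 'X_{1..D} :=
  sort (fun a b : 'X_{1..D} => lexge a b)
    [seq bmnm m | m <- enum {: 'X_{1..D < k.+1}} & mdeg (bmnm m) == k].

Definition bsz (k : nat) : nat := size (mons k).

Fixpoint dimt (n : nat) : nat :=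
  match n with 0 => 0%N | n'.+1 => (dimt n' + bsz n')%N end.

Definition tidx (n : nat) : seq 'X_{1..D} := flatten [seq mons j | j <- iota 0 n].

Definition ti (n : nat) (i : nat) : 'X_{1..D} := nth 0%MM (tidx n) i.

Definition smx := 'X_{1..D} -> 'X_{1..D} -> F.

Definition trunc (A : smx) (n : nat) : 'M[F]_(dimt n) :=
  \matrix_(i, j) A (ti n i) (ti n j).

Definition blk (A : smx) (k : nat) : 'M[F]_(bsz k) :=
  \matrix_(i, j) A (nth 0%MM (mons k) i) (nth 0%MM (mons k) j).

Definition block_lower_unitriangular (S : smx) : Prop :=
  (forall a b : 'X_{1..D}, (mdeg a < mdeg b)%N -> S a b = 0) /\
  (forall a b : 'X_{1..D}, mdeg a = mdeg b -> S a b = (a == b)%:R).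

Definition block_diagonal (H : smx) : Prop :=
  forall a b : 'X_{1..D}, mdeg a <> mdeg b -> H a b = 0.

Definition moment (u : {mpoly F[D]} -> F) : smx :=
  fun a b => u ('X_[a] * 'X_[b]).

Definition quasi_definite (u : {mpoly F[D]} -> F) : Prop :=
  forall n, \det (trunc (moment u) n) != 0.

Definition LDU_factorization (G S H : smx) : Prop :=
  [/\ block_lower_unitriangular S, block_diagonal H &
      forall n, trunc G n = invmx (trunc S n) *m trunc H n *m (invmx (trunc S n))^T].

Definition OP (S : smx) (a : 'X_{1..D}) : {mpoly F[D]} :=
  \sum_(b : 'X_{1..D < (mdeg a).+1}) (S a (bmnm b))%:MP * 'X_[bmnm b].

Definition OPblk (S : smx) (k : nat) : 'cV[{mpoly F[D]}]_(bsz k) :=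
  \col_i OP S (nth 0%MM (mons k) i).

Definition Rmat (uc : {mpoly F[D]} -> F) (S : smx) : smx :=
  fun a b => uc (OP S a * 'X_[b]).

End MultiOP.

(* last quasi-determinant Theta_*(M) = D - C A^{-1} B for
   M = [[A, B], [C, D]] with A square (m x m) *)
Definition qdet (T : comUnitRingType) (m n q : nat) (M : 'M[T]_(m + n, m + q))
  : 'M[T]_(n, q) :=
  drsubmx M - dlsubmx M *m invmx (ulsubmx M) *m ursubmx M.

(* the matrix ( R_{[i],[j]} (j < k) | P_{[i]}(x) ), i = 0..k, over C[x] *)
Definition RPmat (F : fieldType) (D : nat) (R S : smx F D) (k : nat)
  : 'M[{mpoly F[D]}]_(dimt D k + bsz D k, dimt D k + 1) :=
  \matrix_(i, j)
    match split j with
    | inl j' => (R (ti D k.+1 i) (ti D k j'))%:MP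
    | inr _ => OP S (ti D k.+1 i)
    end.

(* Main.v *)
Require Import Defs.
From HB Require Import structures.
From mathcomp Require Import all_boot all_order all_algebra.
From mathcomp Require Import reals.
From mathcomp Require Import complex.
From mathcomp Require Import mpoly.
Import Order.TTheory GRing.Theory Num.Theory.
Local Open Scope ring_scope.
Set Implicit Arguments. Unset Strict Implicit. Unset Printing Implicit Defensive.

Lemma invmxM' (T : comUnitRingType) n (X A : 'M[T]_n) :
  X \in unitmx -> A \in unitmx -> invmx (X *m A) = invmx A *m invmx X.
Proof.
move=> uX uA; have uXA : X *m A \in unitmx by rewrite unitmx_mul uX uA.
have h : (X *m A) *m (invmx A *m invmx X) = 1%:M.
  by rewrite mulmxA mulmxK // mulmxV.
by rewrite -[LHS]mulmx1 -h mulmxA mulVmx // mul1mx.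
Qed.

Lemma qdet_mulL (T : comUnitRingType) m n q (L : 'M[T]_(m + n)) (M : 'M[T]_(m + n, m + q)) :
  ursubmx L = 0 -> drsubmx L = 1%:M -> ulsubmx L \in unitmx -> ulsubmx M \in unitmx ->
  qdet (L *m M) = qdet M.
Proof.
move=> h0 h1 uL uM; rewrite /qdet -[L]submxK -[M]submxK h0 h1 mulmx_block.
rewrite block_mxKul block_mxKur block_mxKdl block_mxKdr !block_mxKul block_mxKur
  block_mxKdl block_mxKdr.
rewrite !mul0mx !mul1mx !addr0 invmxM' // mulmxDl.
have key P : P *m (invmx (ulsubmx M) *m invmx (ulsubmx L)) *m (ulsubmx L *m ursubmx M)
   = P *m invmx (ulsubmx M) *m ursubmx M by rewrite !mulmxA mulmxKV.
rewrite mulmxDl !key mulmxK //.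
rewrite opprD addrA; congr (_ - _); by rewrite addrC addrA addNr add0r.
Qed.

Lemma ldu_blocks (F : fieldType) m n (L G H : 'M[F]_(m + n)) :
  L \in unitmx -> ursubmx L = 0 -> drsubmx L = 1%:M ->
  ursubmx H = 0 -> dlsubmx H = 0 ->
  G = invmx L *m H *m (invmx L)^T ->
  dlsubmx L *m ulsubmx G + dlsubmx G = 0 /\
  drsubmx H = dlsubmx L *m ursubmx G + drsubmx G.
Proof.
move=> uL h0 h1 hH0 hH1 hG.
have e : H = L *m G *m L^T.
  by rewrite hG !mulmxA mulmxV // mul1mx -mulmxA -trmx_mul mulmxV // trmx1 mulmx1.
have eL : L = block_mx (ulsubmx L) 0 (dlsubmx L) 1%:M by rewrite -[L]submxK h0 h1 !block_mxKul !block_mxKdl.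
have uLu : ulsubmx L \in unitmx.
  move: uL; rewrite !unitmxE {1}eL det_lblock det1 mulr1 //.
move: e; rewrite eL -[G]submxK tr_block_mx !mulmx_block.
rewrite -[H]submxK hH0 hH1 => /eq_block_mx [_ _ e3 e4].
rewrite ?trmx0 ?trmx1 ?mul0mx ?mulmx0 ?mulmx1 ?mul1mx ?add0r ?addr0 in e3 e4.
have k : dlsubmx L *m ulsubmx G + dlsubmx G = 0.
  have := congr1 (mulmx^~ (invmx (ulsubmx L)^T)) e3.
  by rewrite mul0mx -mulmxA mulmxV ?unitmx_tr // mulmx1 => <-.
rewrite ?block_mxKul ?block_mxKur ?block_mxKdl ?block_mxKdr in k *.
split => //; rewrite e4 (mulmxDl _ _ (dlsubmx L)^T) -mulmxDl k mul0mx add0r //.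
Qed.


Section Comb.
Variable D : nat.

Lemma mem_mons k (c : 'X_{1..D}) : (c \in mons D k) = (mdeg c == k).
Proof.
rewrite /mons mem_sort; apply/mapP/idP.
  by case=> m; rewrite mem_filter => /andP[/eqP h _] ->; rewrite h.
move=> /eqP h; have hc : (mdeg c < k.+1)%N by rewrite h.
by exists (BMultinom hc); rewrite // mem_filter /= h eqxx mem_enum.
Qed.

Lemma uniq_mons k : uniq (mons D k).
Proof.
rewrite /mons sort_uniq (map_inj_uniq val_inj).
by apply: filter_uniq; apply: enum_uniq.
Qed.

Lemma tidxS n : tidx D n.+1 = tidx D n ++ mons D n.
Proof. by rewrite /tidx -addn1 iotaD map_cat flatten_cat /= cats0. Qed.

Lemma mem_tidx n (c : 'X_{1..D}) : (c \in tidx D n) = (mdeg c < n)%N.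
Proof.
elim: n => [|n IH]; first by rewrite ltn0.
by rewrite tidxS mem_cat IH mem_mons ltnS [RHS]leq_eqVlt orbC.
Qed.

Lemma uniq_tidx n : uniq (tidx D n).
Proof.
elim: n => [|n IH]; first by [].
rewrite tidxS cat_uniq IH uniq_mons andbT /=; apply/hasPn => c.
by rewrite mem_mons mem_tidx => /eqP ->; rewrite ltnn.
Qed.

Lemma size_tidx n : size (tidx D n) = dimt D n.
Proof. by elim: n => [|n IH] //; rewrite tidxS size_cat IH. Qed.

Lemma ti_lshift n (i : 'I_(dimt D n)) : ti D n.+1 (lshift (bsz D n) i) = ti D n i.
Proof. by rewrite /ti tidxS nth_cat size_tidx /= ltn_ord. Qed.

Lemma ti_rshift n (j : 'I_(bsz D n)) : ti D n.+1 (rshift (dimt D n) j) = nth 0%MM (mons D n) j.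
Proof. by rewrite /ti tidxS nth_cat size_tidx /= ltnNge leq_addr /= addKn. Qed.

Lemma mdeg_ti n (i : 'I_(dimt D n)) : (mdeg (ti D n i) < n)%N.
Proof. by rewrite -mem_tidx /ti mem_nth // size_tidx. Qed.

Lemma mdeg_mons n (j : 'I_(bsz D n)) : mdeg (nth 0%MM (mons D n) j) = n.
Proof. by apply/eqP; rewrite -mem_mons mem_nth. Qed.

End Comb.


Section Sums.
Variables (D : nat) (V : nmodType).

Lemma sum_bm n (f : 'X_{1..D} -> V) :
  \sum_(b : 'X_{1..D < n}) f (bmnm b) = \sum_(c <- tidx D n) f c.
Proof.
rewrite -big_enum -(big_map (@bmnm D n) xpredT f); apply: perm_big.
apply: uniq_perm.
- by rewrite (map_inj_uniq val_inj) enum_uniq.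
- exact: uniq_tidx.
move=> c; rewrite mem_tidx; apply/mapP/idP.
  by case=> b _ ->; apply: bmdeg.
by move=> h; exists (BMultinom h); rewrite ?mem_enum.
Qed.

Lemma sum_tidx_ord n (f : 'X_{1..D} -> V) :
  \sum_(c <- tidx D n) f c = \sum_(i < dimt D n) f (ti D n i).
Proof. by rewrite (big_nth 0%MM) size_tidx big_mkord. Qed.

Lemma tidx_add m p : tidx D (m + p) = tidx D m ++ flatten [seq mons D j | j <- iota m p].
Proof. by rewrite /tidx iotaD map_cat flatten_cat. Qed.

Lemma sum_tidx_ext m p (f : 'X_{1..D} -> V) :
  (forall c, (m <= mdeg c)%N -> f c = 0) ->
  \sum_(c <- tidx D (m + p)) f c = \sum_(c <- tidx D m) f c.
Proof.
move=> h; rewrite tidx_add big_cat /= [X in _ + X]big1_seq ?addr0 // => c /andP[_].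
move=> /flatten_mapP[j]; rewrite mem_iota mem_mons => /andP[hj _] /eqP hc.
by apply: h; rewrite hc.
Qed.
End Sums.

Section Blocks.
Variables (F : fieldType) (D : nat).
Implicit Types (X S H : smx F D).

Definition tr1 X n : 'M[F]_(dimt D n + bsz D n) := trunc X n.+1.

Lemma ul_trunc X n : ulsubmx (tr1 X n) = trunc X n.
Proof. by apply/matrixP => i j; rewrite !mxE !ti_lshift. Qed.

Lemma dr_trunc X n : drsubmx (tr1 X n) = blk X n.
Proof. by apply/matrixP => i j; rewrite !mxE !ti_rshift. Qed.

Lemma ur_trunc X n : ursubmx (tr1 X n) =
  \matrix_(i, j) X (ti D n i) (nth 0%MM (mons D n) j).
Proof. by apply/matrixP => i j; rewrite !mxE ti_rshift ti_lshift. Qed.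

Lemma dl_trunc X n : dlsubmx (tr1 X n) =
  \matrix_(i, j) X (nth 0%MM (mons D n) i) (ti D n j).
Proof. by apply/matrixP => i j; rewrite !mxE ti_rshift ti_lshift. Qed.

Lemma ur_S S n : block_lower_unitriangular S -> ursubmx (tr1 S n) = 0.
Proof.
case=> h1 _; rewrite ur_trunc; apply/matrixP => i j; rewrite !mxE h1 //.
by rewrite mdeg_mons mdeg_ti.
Qed.

Lemma dr_S S n : block_lower_unitriangular S -> drsubmx (tr1 S n) = 1%:M.
Proof.
case=> _ h2; rewrite dr_trunc; apply/matrixP => i j; rewrite !mxE h2 ?mdeg_mons //.
by rewrite nth_uniq ?uniq_mons.
Qed.

Lemma det_S S n : block_lower_unitriangular S -> \det (trunc S n) = 1.
Proof.
move=> hS; elim: n => [|n IH]; first by rewrite det_mx00.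
have -> : trunc S n.+1 = tr1 S n by [].
by rewrite -[tr1 S n]submxK ur_S // dr_S // det_lblock ul_trunc IH det1 mulr1.
Qed.

Lemma unit_S S n : block_lower_unitriangular S -> trunc S n \in unitmx.
Proof. by move=> hS; rewrite unitmxE det_S // unitr1. Qed.

Lemma ur_H H n : block_diagonal H -> ursubmx (tr1 H n) = 0.
Proof.
move=> h; rewrite ur_trunc; apply/matrixP => i j; rewrite !mxE h //.
by rewrite mdeg_mons => e; move: (mdeg_ti i); rewrite e ltnn.
Qed.

Lemma dl_H H n : block_diagonal H -> dlsubmx (tr1 H n) = 0.
Proof.
move=> h; rewrite dl_trunc; apply/matrixP => i j; rewrite !mxE h //.
by rewrite mdeg_mons => e; move: (mdeg_ti j); rewrite -e ltnn.
Qed.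

Lemma OPexp S a n : block_lower_unitriangular S -> (mdeg a < n)%N ->
  OP S a = \sum_(i < dimt D n) (S a (ti D n i))%:MP * 'X_[ti D n i].
Proof.
case=> h1 _ ha; rewrite /OP (@sum_bm D _ _ (fun c => (S a c)%:MP * 'X_[c])) -(@sum_tidx_ord D _ n (fun c => (S a c)%:MP * 'X_[c])) -(subnKC ha) sum_tidx_ext //.
by move=> c hc; rewrite h1 ?mpolyC0 ?mul0r.
Qed.

End Blocks.


Lemma splitL m n (i : 'I_m) : split (lshift n i) = inl i.
Proof. exact: (unsplitK (inl i)). Qed.
Lemma splitR m n (i : 'I_n) : split (rshift m i) = inr i.
Proof. exact: (unsplitK (inr i)). Qed.

Section Main.
Variables (F : fieldType) (D : nat).

Lemma Rentry (uc : {scalar {mpoly F[D]}}) (S : smx F D) a b n :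
  block_lower_unitriangular S -> (mdeg a < n)%N ->
  Rmat uc S a b = \sum_(l < dimt D n) S a (ti D n l) * moment uc (ti D n l) b.
Proof.
move=> hS ha; rewrite /Rmat (OPexp hS ha) mulr_suml linear_sum.
by apply: eq_bigr => l _; rewrite -mulrA mul_mpolyC linearZ.
Qed.

Lemma Rtrunc (uc : {scalar {mpoly F[D]}}) (S : smx F D) n :
  block_lower_unitriangular S ->
  trunc (Rmat uc S) n = trunc S n *m trunc (moment uc) n.
Proof.
move=> hS; apply/matrixP => i j; rewrite !mxE (Rentry _ _ hS (mdeg_ti i)).
by apply: eq_bigr => l _; rewrite !mxE.
Qed.

Lemma Ysol (uc : {scalar {mpoly F[D]}}) (Sc Hc : smx F D) k :
  quasi_definite uc -> LDU_factorization (moment uc) Sc Hc ->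
  dlsubmx (tr1 Sc k) = - (dlsubmx (tr1 (moment uc) k) *m invmx (ulsubmx (tr1 (moment uc) k)))
  /\ drsubmx (tr1 Hc k) = dlsubmx (tr1 Sc k) *m ursubmx (tr1 (moment uc) k)
                          + drsubmx (tr1 (moment uc) k).
Proof.
move=> hq [hSc hHc hG].
have uS : tr1 Sc k \in unitmx := unit_S k.+1 hSc.
have [e1 e2] := ldu_blocks uS (ur_S k hSc) (dr_S k hSc) (ur_H k hHc) (dl_H k hHc) (hG k.+1).
split => //.
have uA : ulsubmx (tr1 (moment uc) k) \in unitmx by rewrite ul_trunc unitmxE unitfE hq.
have h : dlsubmx (tr1 Sc k) *m ulsubmx (tr1 (moment uc) k) = - dlsubmx (tr1 (moment uc) k).
  by apply/eqP; rewrite -subr_eq0 opprK e1.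
by rewrite -[LHS](mulmxK uA) h mulNmx.
Qed.

Lemma part2 (uc : {scalar {mpoly F[D]}}) (S Sc Hc : smx F D) k :
  block_lower_unitriangular S -> quasi_definite uc -> LDU_factorization (moment uc) Sc Hc ->
  blk Hc k = qdet (m := dimt D k) (n := bsz D k) (q := bsz D k) (trunc (Rmat uc S) k.+1).
Proof.
move=> hS hq hL.
have RT : tr1 (Rmat uc S) k = tr1 S k *m tr1 (moment uc) k := Rtrunc uc k.+1 hS.
change (blk Hc k = qdet (tr1 (Rmat uc S) k)).
rewrite RT qdet_mulL; first last.
- by rewrite ul_trunc unitmxE unitfE hq.
- by rewrite ul_trunc unit_S.
- exact: dr_S.
- exact: ur_S.
have [eY e2] := Ysol k hq hL.
by rewrite -(dr_trunc Hc k) e2 eY /qdet mulNmx addrC ul_trunc.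
Qed.

Definition Nmat (uc : {scalar {mpoly F[D]}}) k :
  'M[{mpoly F[D]}]_(dimt D k + bsz D k, dimt D k + 1) :=
  \matrix_(i, j) match split j with
    | inl j' => (moment uc (ti D k.+1 i) (ti D k j'))%:MP
    | inr _ => 'X_[ti D k.+1 i] end.

Definition chi k : 'cV[{mpoly F[D]}]_(dimt D k) := \col_i 'X_[ti D k i].
Definition chik k : 'cV[{mpoly F[D]}]_(bsz D k) := \col_i 'X_[nth 0%MM (mons D k) i].

Lemma part1 (uc : {scalar {mpoly F[D]}}) (S Sc Hc : smx F D) k :
  block_lower_unitriangular S -> quasi_definite uc -> LDU_factorization (moment uc) Sc Hc ->
  OPblk Sc k = qdet (RPmat (Rmat uc S) S k).
Proof.
move=> hS hq hL.
have hRP : RPmat (Rmat uc S) S k = map_mx (@mpolyC D F) (tr1 S k) *m Nmat uc k.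
  apply/matrixP => i j; rewrite !mxE; under eq_bigr => l _ do rewrite !mxE.
  case: (split j) => j' /=.
    rewrite (Rentry _ _ hS (mdeg_ti (i : 'I_(dimt D k.+1)))) rmorph_sum.
    by apply: eq_bigr => l _; rewrite rmorphM.
  by rewrite (OPexp hS (mdeg_ti (i : 'I_(dimt D k.+1)))).
have uA : trunc (moment uc) k \in unitmx by rewrite unitmxE unitfE hq.
have eA : ulsubmx (Nmat uc k) = map_mx (@mpolyC D F) (ulsubmx (tr1 (moment uc) k)).
  by apply/matrixP => i j; rewrite !mxE splitL !ti_lshift.
have eB : ursubmx (Nmat uc k) = chi k.
  by apply/matrixP => i j; rewrite !mxE splitR ti_lshift.
have eC : dlsubmx (Nmat uc k) = map_mx (@mpolyC D F) (dlsubmx (tr1 (moment uc) k)).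
  by apply/matrixP => i j; rewrite !mxE splitL ti_lshift.
have eDd : drsubmx (Nmat uc k) = chik k.
  by apply/matrixP => i j; rewrite !mxE splitR ti_rshift.
rewrite hRP qdet_mulL; first last.
- by rewrite eA map_unitmx ul_trunc.
- by rewrite -map_ulsubmx map_unitmx ul_trunc unit_S.
- by rewrite -map_drsubmx dr_S // map_mx1.
- by rewrite -map_ursubmx ur_S // map_mx0.
case: (hL) => hSc _ _.
have hO : OPblk Sc k = map_mx (@mpolyC D F) (dlsubmx (tr1 Sc k)) *m chi k + chik k.
  apply/matrixP => i j; rewrite !mxE.
  have hd : (mdeg (nth 0%MM (mons D k) i) < k.+1)%N by rewrite mdeg_mons.
  rewrite (OPexp hSc hd) big_split_ord; congr (_ + _).
    by apply: eq_bigr => l _; rewrite !mxE !ti_lshift ti_rshift.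
  under eq_bigr => l _ do rewrite ti_rshift (proj2 hSc) ?mdeg_mons // nth_uniq ?uniq_mons //.
  rewrite (bigD1 i) //= eqxx big1 ?addr0 => [|l /negPf hl]; last first.
    rewrite (_ : (i == l :> nat) = false) ?mpolyC0 ?mul0r //; rewrite eq_sym; exact: hl.
  by rewrite mulr1n mpolyC1 mul1r.
have [eY _] := Ysol k hq hL.
rewrite /qdet eA eB eC eDd hO eY map_mxN map_mxM map_invmx mulNmx addrC.
reflexivity.
Qed.

End Main.


Theorem mainTheorem3 (R : realType) (D : nat) (hD : (0 < D)%N)
  (u uc : {scalar {mpoly R[i][D]}}) (Q2 : {mpoly R[i][D]})
  (S H Sc Hc : smx R[i] D) :
  (* Q2 uc = u, i.e. <uc, Q2 p> = <u, p> for every polynomial p *)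
  (forall p : {mpoly R[i][D]}, uc (Q2 * p) = u p) ->
  quasi_definite u -> quasi_definite uc ->
  (* G = S^{-1} H S^{-T} and Gc = Sc^{-1} Hc Sc^{-T} *)
  LDU_factorization (moment u) S H ->
  LDU_factorization (moment uc) Sc Hc ->
  forall k : nat, (0 < k)%N ->
    OPblk Sc k = qdet (RPmat (Rmat uc S) S k) /\
    blk Hc k = qdet (m := dimt D k) (n := bsz D k) (q := bsz D k)
                    (trunc (Rmat uc S) k.+1).
Proof.
move=> _ _ huc [hS _ _] hLc k _; split.
- exact: part1 hS huc hLc.
- exact: part2 hS huc hLc.
Qed.
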